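(* Let $G$ be a finite graph with $n$ vertices, let $0<\epsilon<1$, and let $d$ be an integer such that for every vertex $v$ of $G$, at least $(1-\epsilon)n$ vertices of $G$ are at distance exactly $d$ from $v$. Suppose that for some integer $r\ge 0$ with $2r+1\le d$ and some $N>0$ we have $|N_r(v)|\ge N$ for every vertex $v$ of $G$. Then $|N_{3r+1}(v)| \ge N\epsilon^{-1}$ for every vertex $v$ of $G$.
   Context: For a vertex $v$ and integer $s\ge0$, $N_s(v)$ denotes the set of vertices at graph distance at most $s$ from $v$. The paper calls such a $G$ $\epsilon$-distance-uniform with critical distance $d$. *)

(* Defs.v *)
From HB Require Import structures.
From mathcomp Require Import all_boot all_order all_algebra.
Set Implicit Arguments. Unset Strict Implicit. Unset Printing Implicit Defensive.

Definition simple_graph (T : finType) (e : rel T) : Prop :=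
  irreflexive e /\ symmetric e.

(* ball e s v = N_s(v): vertices at graph distance at most s from v. *)
Fixpoint ball (T : finType) (e : rel T) (s : nat) (v : T) : {set T} :=
  match s with
  | 0 => [set v]
  | s'.+1 => ball e s' v :|: [set w | [exists u in ball e s' v, e u w]]
  end.

Definition sphere (T : finType) (e : rel T) (d : nat) (v : T) : {set T} :=
  match d with
  | 0 => [set v]
  | d'.+1 => ball e d v :\: ball e d' v
  end.

(* Main.v *)
Require Import Defs.
From HB Require Import structures.
From mathcomp Require Import all_boot all_order all_algebra.
From mathcomp Require Import zify ring lra.
Import Order.TTheory GRing.Theory Num.Theory.
Set Implicit Arguments. Unset Strict Implicit.

Section G.
Variables (T : finType) (e : rel T).

Lemma ballSE s v x : (x \in ball e s.+1 v) =
  (x \in ball e s v) || [exists u in ball e s v, e u x].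
Proof. by rewrite /= in_setU in_set. Qed.

Lemma ball0E v x : (x \in ball e 0 v) = (x == v).
Proof. by rewrite /= in_set1. Qed.

Lemma ball_le s t v : (s <= t)%N -> ball e s v \subset ball e t v.
Proof.
move=> /subnK <-; elim: (t - s)%N => [|k IH] //=.
apply: subset_trans IH _; rewrite ?addSn; exact: subsetUl.
Qed.

Lemma ball_mono s t v x : (s <= t)%N -> x \in ball e s v -> x \in ball e t v.
Proof. by move=> H; move/subsetP: (@ball_le s t v H); apply. Qed.

Lemma ball_trans a b x y z : y \in ball e a x -> z \in ball e b y ->
  z \in ball e (a + b) x.
Proof.
move=> Hy; elim: b z => [|b IH] z.
  by rewrite ball0E addn0 => /eqP ->.
rewrite ballSE addnS => /orP [/IH H|/existsP [u /andP [Hu Huz]]].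
  by apply: ball_mono H; lia.
rewrite ballSE; apply/orP; right; apply/existsP; exists u.
by rewrite IH.
Qed.

Lemma ball_sym a x y : symmetric e -> y \in ball e a x -> x \in ball e a y.
Proof.
move=> se; elim: a y => [|a IH] y.
  by rewrite !ball0E eq_sym.
rewrite ballSE => /orP [/IH H|/existsP [u /andP [Hu Huy]]].
  by apply: ball_mono H; lia.
have H1 : u \in ball e 1 y.
  rewrite ballSE; apply/orP; right; apply/existsP; exists y.
  by rewrite ball0E eqxx se.
have := @ball_trans 1 a y u x H1 (IH _ Hu); by rewrite add1n.
Qed.

Lemma ball_split a b x v : x \in ball e (a + b) v ->
  exists2 y, y \in ball e a v & x \in ball e b y.
Proof.
elim: b x => [|b IH] x.
  by rewrite addn0 => H; exists x => //; rewrite ball0E.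
rewrite addnS ballSE => /orP [/IH [y Hy Hx]|/existsP [u /andP [Hu Hux]]].
  by exists y => //; apply: ball_mono Hx; lia.
have [y Hy Huy] := IH _ Hu; exists y => //.
rewrite ballSE; apply/orP; right; apply/existsP; exists u; by rewrite Huy.
Qed.

Lemma cover_count (A W : {set T}) (F : T -> {set T}) :
  (forall z, z \in A -> exists2 w, w \in W & z \in F w) ->
  (#|A| <= \sum_(w in W) #|F w|)%N.
Proof.
move=> Hc.
rewrite -sum1_card.
have -> : \sum_(w in W) #|F w| = \sum_(w in W) \sum_z (z \in F w : nat).
  apply: eq_bigr => w _; rewrite -sum1_card big_mkcond /=.
  by apply: eq_bigr => z _; case: (z \in F w).
rewrite exchange_big /=.
rewrite [X in (_ <= X)%N](bigID (fun z => z \in A)) /=.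
apply: leq_trans (leq_addr _ _).
apply: leq_sum => z /Hc [w Hw Hz].
by rewrite (bigD1 w) //= Hz.
Qed.

Lemma disj_count (U W : {set T}) (F : T -> {set T}) :
  (forall w, w \in W -> F w \subset U) ->
  (forall w1 w2 z, w1 \in W -> w2 \in W -> z \in F w1 -> z \in F w2 -> w1 = w2) ->
  (\sum_(w in W) #|F w| <= #|U|)%N.
Proof.
move=> HU Hd.
have -> : \sum_(w in W) #|F w| = \sum_(w in W) \sum_z (z \in F w : nat).
  apply: eq_bigr => w _; rewrite -sum1_card big_mkcond /=.
  by apply: eq_bigr => z _; case: (z \in F w).
rewrite exchange_big /= -sum1_card [X in (_ <= X)%N]big_mkcond /=.
apply: leq_sum => z _.
case: (boolP [exists w in W, z \in F w]) => [/existsP [w0 /andP [Hw0 Hz0]]|Hn].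
  rewrite (bigD1 w0) //= Hz0.
  have -> : z \in U by move/subsetP: (HU _ Hw0); apply.
  rewrite big1 // => w /andP [Hw Hne].
  case Hzw: (z \in F w) => //.
  by rewrite (Hd _ _ _ Hw Hw0 Hzw Hz0) eqxx in Hne.
rewrite big1 // => w Hw.
case Hzw: (z \in F w) => //.
by case/existsP: Hn; exists w; rewrite Hw Hzw.
Qed.

End G.

Local Open Scope ring_scope.

Theorem lemma4 (R : realFieldType) (T : finType) (e : rel T) (eps N : R)
    (d r : nat) :
  simple_graph e ->
  0 < eps -> eps < 1 ->
  (forall v : T, (1 - eps) * #|T|%:R <= #|sphere e d v|%:R) ->
  (2 * r + 1 <= d)%N ->
  0 < N ->
  (forall v : T, N <= #|ball e r v|%:R) ->
  forall v : T, N / eps <= #|ball e (3 * r + 1) v|%:R.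
Proof.
move=> [_ se] e0 e1 Hsph Hd N0 HN v.
pose P := fun W : {set T} => [&& v \in W, W \subset ball e (2 * r + 1) v &
  [forall w1 in W, forall w2 in W, (w1 != w2) ==> (w2 \notin ball e (2 * r) w1)]].
have P1 : P [set v].
  rewrite /P in_set1 eqxx /= sub1set; apply/andP; split.
    by apply: (@ball_mono _ _ 0) => //; rewrite ball0E.
  apply/forallP => w1; apply/implyP; rewrite in_set1 => /eqP ->.
  apply/forallP => w2; apply/implyP; rewrite in_set1 => /eqP ->.
  by rewrite eqxx.
have [W HW _] := maxset_exists P1.
have /maxsetP [PW Hmax] := HW.
case/and3P: PW => vW WB /forallP Wsep.
have Hcov : forall y, y \in ball e (2 * r + 1) v -> exists2 w, w \in W & y \in ball e (2 * r) w.
  move=> y Hy; case: (boolP (y \in W)) => yW.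
    by exists y => //; apply: (@ball_mono _ _ 0) => //; rewrite ball0E.
  case: (boolP [exists w in W, y \in ball e (2 * r) w]).
    by case/existsP => w /andP [Hw Hyw]; exists w.
  move=> Hn; exfalso.
  have PB : P (y |: W).
    rewrite /P in_setU vW orbT /= subUset sub1set Hy WB /=.
    apply/forallP => w1; apply/implyP; rewrite in_setU1 => Hw1.
    apply/forallP => w2; apply/implyP; rewrite in_setU1 => Hw2.
    apply/implyP => Hne.
    case/orP: Hw1 => [/eqP E1|Hw1]; case/orP: Hw2 => [/eqP E2|Hw2].
    - by rewrite E1 E2 eqxx in Hne.
    - apply/negP => H; case/existsP: Hn; exists w2; rewrite Hw2 /=.
      by rewrite -E1; apply: ball_sym.
    - apply/negP => H; case/existsP: Hn; exists w1; rewrite Hw1 /=.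
      by rewrite -E2.
    - by move: (Wsep w1); rewrite Hw1 => /forallP /(_ w2); rewrite Hw2 Hne.
  have := Hmax _ PB (subsetUr _ _) => E.
  by move: yW; rewrite -E setU11.
have Hball : (\sum_(w in W) #|ball e r w| <= #|ball e (3 * r + 1) v|)%N.
  apply: disj_count.
    move=> w Hw; apply/subsetP => z Hz.
    have Hwv : w \in ball e (2 * r + 1) v by move/subsetP: WB; apply.
    have := ball_trans Hwv Hz.
    by have -> : (2 * r + 1 + r = 3 * r + 1)%N by lia.
  move=> w1 w2 z Hw1 Hw2 Hz1 Hz2.
  apply/eqP; apply/negPn/negP => Hne.
  have := ball_trans Hz1 (ball_sym se Hz2).
  have -> : (r + r = 2 * r)%N by lia.
  by move: (Wsep w1); rewrite Hw1 => /forallP /(_ w2); rewrite Hw2 Hne => /= /negP.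
have Hcomp : (#|[set: T]| <= \sum_(w in W) #|~: sphere e d w|)%N.
  apply: cover_count => x _.
  case: (boolP (x \in sphere e d v)) => Hx; last by exists v; rewrite ?inE.
  move: Hx; case Ed: d Hd => [|k] Hd'; first by lia.
  rewrite /sphere in_setD => /andP [_ Hx].
  rewrite -Ed in Hx.
  have Ed2 : d = ((2 * r + 1) + (d - (2 * r + 1)))%N by lia.
  rewrite Ed2 in Hx.
  have [y Hy Hxy] := ball_split Hx.
  have [w Hw Hyw] := Hcov y Hy.
  exists w => //.
  rewrite inE /sphere in_setD negb_and negbK.
  apply/orP; left.
  have := ball_trans Hyw Hxy.
  by have -> : (2 * r + (d - (2 * r + 1)) = k)%N by lia.
set n := #|T|.
set k := #|W|.
have n0 : (0 < n)%N by apply/card_gt0P; exists v.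
have H1 : n%:R <= \sum_(w in W) (n%:R - #|sphere e d w|%:R) :> R.
  have : (n <= \sum_(w in W) #|~: sphere e d w|)%N by move: Hcomp; rewrite cardsT.
  rewrite -(ler_nat R) natr_sum => H; apply: le_trans H _.
  by apply: ler_sum => w _; rewrite cardsCs setCK natrB ?lexx // -cardsT subset_leq_card ?subsetT.
have H2 : \sum_(w in W) (n%:R - #|sphere e d w|%:R) <= \sum_(w in W) (eps * n%:R) :> R.
  by apply: ler_sum => w _; have := Hsph w; rewrite -/n; lra.
rewrite sumr_const -/k in H2.
have H3 : \sum_(w in W) N <= \sum_(w in W) #|ball e r w|%:R :> R.
  by apply: ler_sum => w _; apply: HN.
rewrite sumr_const -/k -natr_sum in H3.
have H5 : (\sum_(w in W) #|ball e r w|)%:R <= #|ball e (3 * r + 1) v|%:R :> R by rewrite ler_nat.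
have H4 := le_trans H3 H5.
have Hk : 1 <= eps * k%:R.
  have Hn : 0 < n%:R :> R by rewrite ltr0n.
  have : n%:R <= (eps * k%:R) * n%:R :> R.
    by apply: le_trans H1 (le_trans H2 _); rewrite -mulr_natr; lra.
  by rewrite -{1}[n%:R]mul1r ler_pM2r.
apply: le_trans H4.
rewrite ler_pdivrMr // -mulr_natr.
nra.
Qed.
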